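(* Let $\ell,t,s,d,m$ be positive integers with $m\ge d$, and $\mathbb{F}$ a finite field. Suppose $\pi=(\mathsf{Share},\mathsf{Eval},\mathsf{Rec})$ is a $t$-private $s$-server HSS scheme for a non-trivial class $\mathcal{F}\subseteq\mathrm{POLY}_{d,m}(\mathbb{F})^\ell$, which is linear over $\mathbb{F}$, whose $\mathsf{Share}$ is $t$-CNF sharing, and whose download rate equals $(s-dt)/s$. Let $n=\ell s/(s-dt)$. Then there exist a linear code $\mathcal{C}\subseteq\mathbb{F}^n$ of rate $(s-dt)/s$ and a labeling $\mathcal{L}:[n]\to[s]$ with $\Delta_{\mathcal{L}}(\mathcal{C})\ge dt+1$. (Specifically, $\mathcal{C}$ is the row span of the reconstruction matrix of $\pi$, and $\mathcal{L}(r)$ is the server sending the $r$-th downloaded symbol.)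
   Context: $\mathrm{POLY}_{d,m}(\mathbb{F})$: polynomials in $\mathbb{F}[X_1,\ldots,X_m]$ of total degree $\le d$. Amortized HSS for $\mathcal{F}\subseteq\mathrm{POLY}_{d,m}(\mathbb{F})^\ell$: $\ell m$ secrets $x^{(i)}_k\in\mathbb{F}$, $\mathbf{x}^{(i)}=(x^{(i)}_1,\dots,x^{(i)}_m)$, each shared independently by randomized $\mathsf{Share}$ into $s$ shares, server $j$ receiving the $j$-th share of each; given $\mathbf{f}=(f_1,\ldots,f_\ell)\in\mathcal{F}$, server $j$ computes output share $z_j=\mathsf{Eval}(\mathbf{f},j,\text{its shares})\in\mathbb{F}^{n_j}$ (arbitrary function); $\mathsf{Rec}(z_1\circ\cdots\circ z_s)$ must equal $(f_i(\mathbf{x}^{(i)}))_{i\in[\ell]}$ with probability 1 for all secrets and $\mathbf{f}$. $t$-private: any $\le t$ shares of a secret have distribution independent of the secret. Linear: $\mathsf{Share}$ and $\mathsf{Rec}:\mathbb{F}^{\sum n_j}\to\mathbb{F}^\ell$ are $\mathbb{F}$-linear ($\mathsf{Eval}$ arbitrary). Download rate: $\ell/\sum_j n_j$ (ratio of output bits to downloaded bits). $t$-CNF sharing of $x\in\mathbb{F}$ among $s$ servers: choose $y_T\in\mathbb{F}$ for all $T\subseteq[s]$, $|T|=t$, uniformly at random subject to $\sum_T y_T=x$; server $j$ receives $(y_T: j\notin T)$. $\mathcal{F}$ is non-trivial if some $(f_1,\ldots,f_\ell)\in\mathcal{F}$ has every $f_i$ containing (with nonzero coefficient) a monomial in at least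 $d$ distinct variables. A labeling is a surjection $\mathcal{L}:[n]\to[s]$. Labelweight: for $\mathbf{c}\in\mathbb{F}^n$, $\Delta_{\mathcal{L}}(\mathbf{c})=|\{\mathcal{L}(i): c_i\neq0\}|$; for a code $\mathcal{C}$, $\Delta_{\mathcal{L}}(\mathcal{C})=\min_{\mathbf{0}\ne\mathbf{c}\in\mathcal{C}}\Delta_{\mathcal{L}}(\mathbf{c})$. Rate of a linear code of dimension $k$ in $\mathbb{F}^n$ is $k/n$. *)

(* Defs.v *)
From HB Require Import structures.
From mathcomp Require Import all_boot all_order all_algebra.
From mathcomp Require Import mpoly.
Set Implicit Arguments. Unset Strict Implicit. Unset Printing Implicit Defensive.
Import Order.TTheory GRing.Theory Num.Theory.
Local Open Scope ring_scope.

Section HSS.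
Variable F : finFieldType.

(* Randomness of t-CNF sharing: values y_T for T ⊆ [s], |T| = t.  We encode
   it as a finite function on all subsets that vanishes off the t-subsets. *)
Definition cnf_shares (s t : nat) (x : F) : {set {ffun {set 'I_s} -> F}} :=
  [set y : {ffun {set 'I_s} -> F} |
     [forall T : {set 'I_s}, (#|T| != t) ==> (y T == 0)] &&
     (\sum_(T : {set 'I_s} | #|T| == t) y T == x)].

(* The joint view of a coalition S of servers: server j gets y_T for j ∉ T,
   so S sees y_T exactly when |T| = t and S is not contained in T. *)
Definition cnf_view (s t : nat) (S : {set 'I_s}) (y : {ffun {set 'I_s} -> F})
  : {ffun {set 'I_s} -> F} :=
  [ffun T : {set 'I_s} => if (#|T| == t) && ~~ (S \subset T) then y T else 0].

(* t-privacy of t-CNF sharing: for any coalition of at most t servers, the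
   distribution of their shares (y uniform among valid sharings) does not
   depend on the secret.  All sets cnf_shares x have the same size, so this
   is equality of the counts of every possible view. *)
Definition cnf_private (s t : nat) : Prop :=
  forall (S : {set 'I_s}), (#|S| <= t)%N ->
  forall (x x' : F) (v : {ffun {set 'I_s} -> F}),
    #|[set y in cnf_shares s t x | cnf_view t S y == v]| =
    #|[set y in cnf_shares s t x' | cnf_view t S y == v]|.

(* Randomness for all l*m secrets x^(i)_k: Y i k T = y_T for secret (i,k). *)
Definition secret_of (s t : nat) (l m : nat)
  (Y : 'I_l -> 'I_m -> {set 'I_s} -> F) (i : 'I_l) : 'I_m -> F :=
  fun k => \sum_(T : {set 'I_s} | #|T| == t) Y i k T.

Definition server_view (s t : nat) (l m : nat) (j : 'I_s)
  (Y : 'I_l -> 'I_m -> {set 'I_s} -> F) : 'I_l -> 'I_m -> {set 'I_s} -> F :=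
  fun i k T => if (#|T| == t) && (j \notin T) then Y i k T else 0.

Definition in_POLY (d m : nat) (p : {mpoly F[m]}) : bool := (msize p <= d.+1)%N.

Definition has_rich_monomial (d m : nat) (p : {mpoly F[m]}) : Prop :=
  exists2 mon : 'X_{1..m}, mon \in msupp p & (d <= #|[set k : 'I_m | mon k != 0%N]|)%N.

Definition nontrivial_class (l d m : nat) (Fc : ('I_l -> {mpoly F[m]}) -> Prop) : Prop :=
  exists2 f, Fc f & forall i : 'I_l, has_rich_monomial d (f i).

Definition labelweight (n s : nat) (L : 'I_n -> 'I_s) (c : 'rV[F]_n) : nat :=
  #|[set L r | r in [set r : 'I_n | c 0 r != 0]]|.

End HSS.

(* Main.v *)
Require Import Defs.
From HB Require Import structures.
From mathcomp Require Import all_boot all_order all_algebra.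
From mathcomp Require Import mpoly.
From mathcomp Require Import zify ring.
From Stdlib Require Import FunctionalExtensionality.
Import Order.TTheory GRing.Theory Num.Theory.

Module P1M.
Set Implicit Arguments. Unset Strict Implicit.
Local Open Scope ring_scope.

Section Dif.
Variables (A : Type) (R : comRingType) (add : A -> A -> A).

Fixpoint dif (vs : seq A) (g : A -> R) : A -> R :=
  match vs with [::] => g | v :: vs' => dif vs' (fun Y => g (add Y v) - g Y) end.

Fixpoint inl (v : A) (vs : seq A) : Prop :=
  match vs with [::] => False | w :: ws => w = v \/ inl v ws end.

Lemma dif_ext vs g h : g =1 h -> dif vs g =1 dif vs h.
Proof.
elim: vs g h => [|v vs IH] g h e Y //=.
by apply: IH => Z; rewrite !e.
Qed.

Lemma dif0 vs Y : dif vs (fun _ => 0) Y = 0.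
Proof.
elim: vs Y => [|v vs IH] Y //=.
by rewrite (dif_ext _ (h := fun _ => 0)) // => Z; rewrite subrr.
Qed.

Lemma dif_sum (I : Type) (r : seq I) (P : pred I) vs (G : I -> A -> R) Y :
  dif vs (fun Y => \sum_(i <- r | P i) G i Y) Y = \sum_(i <- r | P i) dif vs (G i) Y.
Proof.
elim: vs G Y => [|v vs IH] G Y //=.
rewrite (dif_ext _ (h := fun Y => \sum_(i <- r | P i) (G i (add Y v) - G i Y))).
  by rewrite IH.
by move=> Z; rewrite sumrB.
Qed.

Lemma dif_scale c vs g Y : dif vs (fun Y => c * g Y) Y = c * dif vs g Y.
Proof.
elim: vs g Y => [|v vs IH] g Y //=.
rewrite (dif_ext _ (h := fun Y => c * (g (add Y v) - g Y))) ?IH //.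
by move=> Z; rewrite mulrBr.
Qed.

Hypothesis addC : forall Y v w, add (add Y v) w = add (add Y w) v.

Lemma dif_inv vs v g : inl v vs -> (forall Y, g (add Y v) = g Y) ->
  forall Y, dif vs g Y = 0.
Proof.
elim: vs g => [|w vs IH] g //= H hinv Y.
case: H => [e|H]; first subst w.
  by rewrite (dif_ext _ (h := fun _ => 0)) ?dif0 // => Z; rewrite hinv subrr.
apply: IH => // Z; by rewrite addC !hinv.
Qed.

End Dif.

Lemma dif_comp (A B : Type) (R : comRingType) (add : A -> A -> A) (addB : B -> B -> B)
  (phi psi : A -> B) (phiH : forall Y v, phi (add Y v) = addB (phi Y) (psi v))
  vs (g : B -> R) Y :
  dif add vs (fun Y => g (phi Y)) Y = dif addB (map psi vs) g (phi Y).
Proof.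
elim: vs g Y => [|v vs IH] g Y //=.
rewrite -IH; apply: dif_ext => Z.
by rewrite phiH.
Qed.

End P1M.
Import P1M.

Module P2M.
Set Implicit Arguments. Unset Strict Implicit.
Local Open Scope ring_scope.

Lemma inl_map (I : eqType) (A : Type) (f : I -> A) (a : I) (r : seq I) :
  a \in r -> inl (f a) (map f r).
Proof.
elim: r => [|b r IH] //=; rewrite in_cons => /orP [/eqP ->|H]; first by left.
by right; apply: IH.
Qed.

Lemma indicator_lemma (m : nat) (mu : 'I_m -> nat) (A : {set 'I_m}) :
  (forall a, a \in A -> (0 < mu a)%N) -> (\sum_i mu i <= #|A|)%N ->
  forall i, mu i = (i \in A).
Proof.
move=> Hpos Hsum.
have Hge : forall i, ((i \in A) <= mu i)%N.
  by move=> i; case: (boolP (i \in A)) => // /Hpos.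
have E : (\sum_i mu i = #|A| + \sum_i (mu i - (i \in A)))%N.
  rewrite -sum1_card [in RHS]big_mkcond /= -big_split /=; apply: eq_bigr => i _.
  by have := Hge i; case: (i \in A) => /=; lia.
have : (\sum_i (mu i - (i \in A)) == 0)%N by rewrite -leqn0; move: Hsum; rewrite E; lia.
rewrite sum_nat_eq0 => /forallP H i.
have := H i; have := Hge i; case: (i \in A) => /=; lia.
Qed.

Section Poly.
Variables (F : fieldType) (m : nat).

Definition addX (X w : 'I_m -> F) : 'I_m -> F := fun k => X k + w k.
Definition ev (a : 'I_m) : 'I_m -> F := fun k => if k == a then 1 else 0.
Definition mono (mu : 'I_m -> nat) (X : 'I_m -> F) : F := \prod_i X i ^+ mu i.

Lemma addXC X v w : addX (addX X v) w = addX (addX X w) v.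
Proof. by apply: functional_extensionality => k; rewrite /addX addrAC. Qed.

Lemma mono_ext mu mu' X : mu =1 mu' -> mono mu X = mono mu' X.
Proof. by move=> e; apply: eq_bigr => i _; rewrite e. Qed.

Lemma mono_inv mu a X : mu a = 0%N -> mono mu (addX X (ev a)) = mono mu X.
Proof.
move=> H; apply: eq_bigr => i _; rewrite /addX /ev.
by case: eqP => [->|_]; rewrite ?H ?expr0 ?addr0.
Qed.

Lemma dif_mono (r : seq 'I_m) : uniq r -> forall mu, (forall a, a \in r -> mu a = 1%N) ->
  forall X, dif addX (map ev r) (mono mu) X = mono (fun i => if i \in r then 0%N else mu i) X.
Proof.
elim: r => [|a r IH] /= Hu mu Hmu X.
  by apply: mono_ext => i.
case/andP: Hu => ar ur.
set mu' := fun i => if i == a then 0%N else mu i.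
rewrite (dif_ext _ _ (h := mono mu')).
  rewrite IH //; last first.
    move=> b br; rewrite /mu'; case: eqP => [e|_]; last by apply: Hmu; rewrite in_cons br orbT.
    by rewrite -e br in ar.
  apply: mono_ext => i; rewrite /mu' in_cons.
  by case: (i \in r); case: (i == a).
move=> Z; rewrite /mono (bigD1 a) //= [in X in _ - X](bigD1 a) //= [in RHS](bigD1 a) //=.
rewrite /mu' eqxx Hmu ?mem_head // expr0 mul1r !expr1 /addX /ev eqxx.
have -> : \prod_(i < m | i != a) (Z i + (if i == a then 1 else 0)) ^+ mu i =
          \prod_(i < m | i != a) Z i ^+ mu i.
  by apply: eq_bigr => i /negbTE ->; rewrite addr0.
have -> : \prod_(i < m | i != a) Z i ^+ (if i == a then 0%N else mu i) =
          \prod_(i < m | i != a) Z i ^+ mu i.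
  by apply: eq_bigr => i /negbTE ->.
rewrite mulrDl mul1r; ring.
Qed.

Lemma poly_dif (p : {mpoly F[m]}) d (mon : 'X_{1..m}) :
  (msize p <= d.+1)%N -> mon \in msupp p -> (d <= #|[set k | mon k != 0%N]|)%N ->
  #|[set k | mon k != 0%N]| = d /\
  dif addX (map ev (enum [set k | mon k != 0%N])) (fun X => p.@[X]) (fun _ => 0) = p@_mon.
Proof.
move=> Hsz Hmon Hd.
set A := [set k | mon k != 0%N].
have {}Hd : (d <= #|A|)%N by exact: Hd.
have Hind : forall mu : 'X_{1..m}, mu \in msupp p -> (forall a, a \in A -> (0 < mu a)%N) ->
    forall i, mu i = (i \in A).
  move=> mu Hmu Hpos; apply: indicator_lemma => //.
  have := msize_mdeg_lt Hmu; rewrite mdegE => H1.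
have H2 := leq_trans H1 Hsz. rewrite -ltnS; apply: (leq_trans H2); by rewrite ltnS.
have HmonA : forall i, mon i = (i \in A).
  by apply: Hind => // a; rewrite inE lt0n.
have HcardA : #|A| = d.
  have := msize_mdeg_lt Hmon; rewrite mdegE.
  rewrite (eq_bigr (fun i => nat_of_bool (i \in A))); last by move=> i _; apply: HmonA.
  have -> : (\sum_i nat_of_bool (i \in A) = #|A|)%N.
    by rewrite -sum1_card [RHS]big_mkcond.
  move=> H1; have H2 := leq_trans H1 Hsz; apply/eqP; rewrite eqn_leq; apply/andP; split => //.
split => //.
rewrite (dif_ext _ _ (h := fun X => \sum_(mu <- msupp p) p@_mu * mono mu X)); last first.
  by move=> X; rewrite mevalE.
rewrite dif_sum.
rewrite (bigD1_seq mon) //= ?msupp_uniq //.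
rewrite big1_seq ?addr0.
  rewrite dif_scale dif_mono ?enum_uniq //; last first.
    by move=> a; rewrite mem_enum => aA; rewrite HmonA aA.
  rewrite /mono big1 ?mulr1 // => i _.
  rewrite mem_enum; case: (boolP (i \in A)) => [_|iA]; first by rewrite expr0.
  by rewrite HmonA (negbTE iA) expr0.
move=> mu /andP [nmu Hmu].
rewrite dif_scale.
case: (boolP [forall a in A, (0 < mu a)%N]) => [/forall_inP Hall|].
  have Hmu' := Hind mu Hmu Hall.
  have : mu = mon by apply/mnmP => i; rewrite Hmu' HmonA.
  by move/eqP; rewrite (negbTE nmu).
rewrite negb_forall_in => /exists_inP [a aA].
rewrite lt0n negbK => /eqP mua.
rewrite (@dif_inv _ _ addX addXC _ (ev a)) ?mulr0 //.
  by apply: inl_map; rewrite mem_enum.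
by move=> Y; apply: mono_inv.
Qed.

End Poly.

End P2M.
Import P2M.

Module P3M.
Set Implicit Arguments. Unset Strict Implicit.

Lemma extend_set (T : finType) (k : nat) (X Y : {set T}) :
  X \subset Y -> (#|X| <= k <= #|Y|)%N -> exists Z : {set T}, [/\ X \subset Z, Z \subset Y & #|Z| = k].
Proof.
move=> XY /andP [Xk kY].
have [e He] : exists e, k - #|X| = e by eexists.
elim: e X XY Xk He => [|e IH] X XY Xk He.
  by exists X; split => //; apply/eqP; rewrite eqn_leq Xk /=; lia.
have : (0 < #|Y :\: X|)%N.
  have := cardsD Y X; rewrite (setIidPr XY) => ->; lia.
case/card_gt0P => y; rewrite inE => /andP [yX yY].
have h1 : y |: X \subset Y by rewrite subUset sub1set yY XY.
have h2 : (#|y |: X| <= k)%N by rewrite cardsU1 yX; lia.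
have h3 : k - #|y |: X| = e by rewrite cardsU1 yX; lia.
have [Z [XZ ZY cZ]] := IH (y |: X) h1 h2 h3.
by exists Z; split => //; apply: subset_trans XZ; apply: subsetUr.
Qed.

Lemma grouping (s m d t : nat) (a0 : 'I_m) (S : {set 'I_s}) (A : {set 'I_m}) :
  (0 < t)%N -> #|A| = d -> (#|S| <= d * t)%N ->
  exists g : 'I_s -> 'I_m, (forall j, j \in S -> g j \in A) /\
    forall a, (#|[set j in S | g j == a]| <= t)%N.
Proof.
move=> Ht HA HS.
pose g := fun j : 'I_s => nth a0 (enum A) (index j (enum S) %/ t).
have Hq : forall j, j \in S -> (index j (enum S) %/ t < size (enum A))%N.
  move=> j jS; rewrite -cardE HA ltn_divLR //.
  have : (index j (enum S) < size (enum S))%N by rewrite index_mem mem_enum.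
  rewrite -cardE; lia.
exists g; split.
  by move=> j jS; rewrite -mem_enum /g mem_nth // Hq.
move=> a.
pose h := fun j : 'I_s => Ordinal (ltn_pmod (index j (enum S)) Ht).
have inj : {in [set j in S | g j == a] &, injective h}.
  move=> j j'; rewrite !inE => /andP [jS /eqP gj] /andP [j'S /eqP gj'] /(congr1 val) /= hm.
  have : g j == g j' by rewrite gj gj'.
  rewrite /g nth_uniq ?enum_uniq ?Hq // => /eqP hq.
  have hi : index j (enum S) = index j' (enum S).
    by rewrite (divn_eq (index j (enum S)) t) (divn_eq (index j' (enum S)) t) hq hm.
  by rewrite -(nth_index j (_ : j \in enum S)) ?mem_enum // hi nth_index ?mem_enum.
rewrite -(card_in_imset inj).
by apply: leq_trans (max_card _) _; rewrite card_ord.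
Qed.

Lemma priv_ts (F : finFieldType) s t : cnf_private F s t -> (t <= s)%N.
Proof.
move=> Hp; rewrite leqNgt; apply/negP => ts.
have H := Hp set0 (_ : (#|set0| <= t)%N) 0%R 1%R (cnf_view t set0 [ffun _ => 0%R]).
move: H; rewrite cards0 => /(_ isT).
have noT : forall T : {set 'I_s}, (#|T| == t) = false.
  move=> T; apply/negbTE; have := max_card T; rewrite card_ord; lia.
set L := #|_|; set R := #|_|.
have -> : R = 0%N.
  apply/eqP; rewrite cards_eq0; apply/eqP/setP => y; rewrite !inE.
  apply/negbTE; rewrite negb_and; apply/orP; left; rewrite negb_and; apply/orP; right.
  by rewrite big_pred0 // eq_sym oner_eq0.
have : (0 < L)%N.
  apply/card_gt0P; exists [ffun _ => 0%R]; rewrite !inE eqxx andbT.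
  apply/andP; split; first by apply/forallP => T; rewrite ffunE eqxx implybT.
  by rewrite big1 // => T _; rewrite ffunE.
by move=> h1 h2; move: h1; rewrite h2.
Qed.

Lemma relabel (n s : nat) : (s <= n)%N -> forall (k : nat) (L0 : 'I_n -> 'I_s),
  (#|[set j | j \notin L0 @: setT]| <= k)%N ->
  exists L : 'I_n -> 'I_s, (forall j, exists r, L r = j) /\
    forall R : {set 'I_n}, (#|L0 @: R| <= #|L @: R|)%N.
Proof.
move=> sn k; elim: k => [|k IH] L0 Hk.
  exists L0; split => // j.
  move: Hk; rewrite leqn0 cards_eq0 => /eqP /setP /(_ j); rewrite !inE => /negbFE.
  by case/imsetP => r _ ->; exists r.
case: (boolP [exists j, j \notin L0 @: setT]) => [/existsP [j0 j0n]|]; last first.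
  rewrite negb_exists => /forallP H; exists L0; split => // j.
  by have := H j; rewrite negbK => /imsetP [r _ ->]; exists r.
have [r1 [r2 [r12 e12]]] : exists r1 r2, r1 != r2 /\ L0 r1 = L0 r2.
  case: (boolP [exists r1, exists r2, (r1 != r2) && (L0 r1 == L0 r2)]).
    by case/existsP => r1 /existsP [r2 /andP [h /eqP e]]; exists r1, r2.
  rewrite negb_exists => /forallP H.
  have inj : injective L0.
    move=> a b e; apply/eqP; have := H a; rewrite negb_exists => /forallP /(_ b).
    by rewrite e eqxx andbT negbK eq_sym.
  have : L0 @: setT = setT.
    apply/eqP; rewrite eqEcard subsetT /= card_imset // !cardsT !card_ord //.
  by move=> E; rewrite E inE in j0n.
pose L1 := fun r => if r == r1 then j0 else L0 r.
have Hk1 : (#|[set j | j \notin L1 @: setT]| <= k)%N.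
  have sub : [set j | j \notin L1 @: setT] \proper [set j | j \notin L0 @: setT].
    apply/properP; split.
      apply/subsetP => j; rewrite !inE; apply: contra => /imsetP [r _ ->].
      case: (eqVneq r r1) => [->|ne].
        by apply/imsetP; exists r2 => //; rewrite /L1 eq_sym (negbTE r12) e12.
      by apply/imsetP; exists r => //; rewrite /L1 (negbTE ne).
    exists j0; first by rewrite inE.
    by rewrite inE negbK; apply/imsetP; exists r1 => //; rewrite /L1 eqxx.
  have := proper_card sub; lia.
have [L [surj mono]] := IH L1 Hk1.
exists L; split => // R.
apply: leq_trans (mono R).
case: (boolP (r1 \in R)) => r1R; last first.
  rewrite (eq_in_imset (g := L1)) // => r rR; rewrite /L1; case: eqP => // e.
  by rewrite -e rR in r1R.
rewrite -(setD1K r1R) !imsetU1.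
have -> : L1 @: (R :\ r1) = L0 @: (R :\ r1).
  apply: eq_in_imset => r; rewrite !inE => /andP [h _]; by rewrite /L1 (negbTE h).
rewrite /L1 eqxx cardsU1 [X in (_ <= X)%N]cardsU1.
have -> : j0 \notin L0 @: (R :\ r1).
  apply: contra j0n => /imsetP [r _ ->]; by apply/imsetP; exists r.
by case: (_ \notin _).
Qed.

End P3M.
Import P3M.

Module P4M.
Set Implicit Arguments. Unset Strict Implicit.
Local Open Scope ring_scope.

Section Core.
Variables (l t s d m : nat) (F : finFieldType).
Local Notation TY := ('I_l -> 'I_m -> {set 'I_s} -> F).

Definition addY (Y v : TY) : TY := fun i k T => Y i k T + v i k T.

Lemma addYC Y v w : addY (addY Y v) w = addY (addY Y w) v.
Proof.
apply: functional_extensionality => i; apply: functional_extensionality => k.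
apply: functional_extensionality => T; by rewrite /addY addrAC.
Qed.

Lemma core_fun (Ht : (0 < t)%N) (Hts : (t <= s)%N) (Hm : (0 < m)%N) (Hd : (0 < d)%N)
  (f : 'I_l -> {mpoly F[m]}) (Hpoly : forall i, in_POLY d (f i))
  (Hrich : forall i, has_rich_monomial d (f i))
  (u : 'I_l -> F) (i0 : 'I_l) (Hu : u i0 != 0)
  (S : {set 'I_s}) (HS : (#|S| <= d * t)%N) (phi : 'I_s -> TY -> F)
  (Heq : forall Y : TY, \sum_i u i * (f i).@[secret_of t Y i] =
                        \sum_(j in S) phi j (server_view t j Y)) : False.
Proof.
have [mon Hmon Hcard] := Hrich i0.
have [HA Hdif] := poly_dif (Hpoly i0) Hmon Hcard.
set A := [set k | mon k != 0%N] in HA Hdif.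
have [g [gA gcard]] := grouping (Ordinal Hm) Ht HA HS.
pose Sa := fun a => [set j in S | g j == a].
have exT : forall a, exists T : {set 'I_s}, (Sa a \subset T) && (#|T| == t).
  move=> a; have h : (#|Sa a| <= t <= #|[set: 'I_s]|)%N.
    by rewrite gcard cardsT card_ord Hts.
  have [Z [h1 _ h3]] := @extend_set _ t (Sa a) setT (subsetT _) h.
  by exists Z; rewrite h1 h3 eqxx.
pose T := fun a => odflt set0 [pick Z : {set 'I_s} | (Sa a \subset Z) && (#|Z| == t)].
have HT : forall a, (Sa a \subset T a) && (#|T a| == t).
  move=> a; rewrite /T; case: pickP => //= H; have [Z HZ] := exT a.
  by rewrite H in HZ.
pose v := fun a : 'I_m => (fun i k T' => if (i == i0) && (k == a) && (T' == T a) then 1 else 0) : TY.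
pose vs := map v (enum A).
pose Y0 : TY := fun _ _ _ => 0.
have E := dif_ext addY vs Heq Y0.
rewrite !dif_sum in E.
rewrite [X in _ = X]big1 in E; last first.
  move=> j jS.
  apply: (dif_inv addYC (v := v (g j))); first by apply: inl_map; rewrite mem_enum gA.
  move=> Y; congr (phi j _).
  apply: functional_extensionality => i; apply: functional_extensionality => k.
  apply: functional_extensionality => T'.
  rewrite /server_view /addY /v.
  case: (eqVneq T' (T (g j))) => [->|ne]; last by rewrite andbF addr0.
  have : j \in T (g j).
    by have /andP [/subsetP h _] := HT (g j); apply: h; rewrite inE jS eqxx.
  by move=> ->; rewrite andbF.
rewrite (bigD1 i0) //= big1 ?addr0 in E; last first.
  move=> i ni.
  have : (0 < #|A|)%N by rewrite HA.
  case/card_gt0P => a1 a1A.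
  apply: (dif_inv addYC (v := v a1)); first by apply: inl_map; rewrite mem_enum.
  move=> Y; congr (_ * _); congr (meval _ _).
  apply: functional_extensionality => k; rewrite /secret_of; apply: eq_bigr => T' _.
  by rewrite /addY /v (negbTE ni) addr0.
rewrite dif_scale in E.
pose psi := fun w : TY => (fun k => \sum_(T' : {set 'I_s} | #|T'| == t) w i0 k T') : 'I_m -> F.
have phiH : forall Y w, secret_of t (addY Y w) i0 = addX (secret_of t Y i0) (psi w).
  move=> Y w; apply: functional_extensionality => k.
  by rewrite /secret_of /addX /psi /addY big_split.
rewrite (dif_comp (phi := fun Y => secret_of t Y i0) phiH vs (fun X => (f i0).@[X])) in E.
have Em : map psi vs = map (@ev F m) (enum A).
  rewrite /vs -map_comp; apply: eq_map => a /=.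
  apply: functional_extensionality => k; rewrite /psi /v /ev eqxx /=.
  case: eqP => _ /=; last by rewrite big1.
  rewrite (bigD1 (T a)) ?(andP (HT a)).2 //= eqxx big1 ?addr0 // => T' /andP [_ /negbTE ->] //.
rewrite Em in E.
have E0 : secret_of t Y0 i0 = (fun _ => 0).
  by apply: functional_extensionality => k; rewrite /secret_of big1.
rewrite E0 in E.
rewrite Hdif in E.
move: E => /eqP; rewrite mulf_eq0 (negbTE Hu) /=.
by move=> /eqP h; move: Hmon; rewrite mcoeff_msupp h eqxx.
Qed.

End Core.

End P4M.
Import P4M.

Local Open Scope ring_scope.
Theorem mainTheorem2
  (l t s d m : nat) (F : finFieldType)
  (Hl : (0 < l)%N) (Ht : (0 < t)%N) (Hs : (0 < s)%N) (Hd : (0 < d)%N) (Hm : (0 < m)%N)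
  (Hmd : (d <= m)%N)
  (* the function class F ⊆ POLY_{d,m}(F)^l, non-trivial *)
  (Fc : ('I_l -> {mpoly F[m]}) -> Prop)
  (HFc : forall f, Fc f -> forall i, in_POLY d (f i))
  (Hnontriv : nontrivial_class d Fc)
  (* Share = t-CNF sharing, which is t-private *)
  (Hpriv : cnf_private F s t)
  (* output share lengths n_j, Eval (arbitrary), linear Rec given by a matrix *)
  (nj : 'I_s -> nat)
  (Eval : ('I_l -> {mpoly F[m]}) -> forall j : 'I_s,
            ('I_l -> 'I_m -> {set 'I_s} -> F) -> 'rV[F]_(nj j))
  (Rec : 'M[F]_(\sum_(j < s) nj j, l))
  (* correctness, for all secrets and all CNF randomness *)
  (Hcorrect : forall f, Fc f -> forall Y : 'I_l -> 'I_m -> {set 'I_s} -> F,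
      @mxrow F s nj 1 (fun j => Eval f j (server_view t j Y)) *m Rec
      = \row_(i < l) (f i).@[secret_of t Y i])
  (* download rate l / sum_j n_j equals (s - dt)/s *)
  (Hrate : (l%:R / (\sum_(j < s) nj j)%:R : rat) = ((s%:R - (d * t)%:R) / s%:R)) :
  let n := ((l * s) %/ (s - d * t))%N in
  exists (k : nat) (G : 'M[F]_(k, n)) (L : 'I_n -> 'I_s),
    [/\ (* C := row span of G has rate (s - dt)/s *)
        ((\rank G)%:R / n%:R : rat) = ((s%:R - (d * t)%:R) / s%:R),
        (* L is a labeling, i.e. a surjection [n] -> [s] *)
        (forall j : 'I_s, exists r : 'I_n, L r = j) &
        (* Δ_L(C) >= dt + 1 *)
        (forall c : 'rV[F]_n, (c <= G)%MS -> c != 0 ->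
           (d * t + 1 <= labelweight L c)%N)].
Proof.
Proof.
move=> n.
have Hts := priv_ts Hpriv.
case: Hnontriv => f Hf Hrich.
have Hpoly := HFc f Hf.
pose N := (\sum_(j < s) nj j)%N.
have core_block : forall u : 'cV[F]_l, u != 0 ->
    (d * t < #|[set j | submxcol (Rec *m u) j != 0%R]|)%N.
  move=> u nu; rewrite ltnNge; apply/negP => HS.
  have [i0 Hi0] : exists i0, u i0 0 != 0.
    apply/existsP; move: nu; apply: contraR; rewrite negb_exists => /forallP H.
    apply/eqP/matrixP => i j; rewrite ord1 mxE; by have := H i; rewrite negbK => /eqP.
  apply: (core_fun Ht Hts Hm Hd Hpoly Hrich (u := fun i => u i 0) Hi0 HS
     (phi := fun j V => (Eval f j V *m submxcol (Rec *m u) j) 0 0)) => Y.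
  have := congr1 (fun M => (M *m u) 0 0) (Hcorrect f Hf Y) => /=.
  rewrite -mulmxA -[Rec *m u]submxcolK mul_mxrow_mxcol summxE => E.
  transitivity ((\row_(i < l) (f i).@[secret_of t Y i] *m u) 0 0).
    by rewrite mxE; apply: eq_bigr => i _; rewrite mxE mulrC.
  rewrite -E (bigID (fun j => j \in [set j | submxcol (Rec *m u) j != 0%R])) /=.
  rewrite [X in _ + X]big1 ?addr0 ?submxcolK //.
  by move=> j; rewrite inE negbK => /eqP ->; rewrite mulmx0 mxE.
have Hsdt : (d * t < s)%N.
  have nu : (const_mx 1 : 'cV[F]_l) != 0.
    apply/negP => /eqP /matrixP /(_ (Ordinal Hl) 0); rewrite !mxE => /eqP; by rewrite oner_eq0.
  have := core_block _ nu => H; apply: leq_trans H _.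
  by apply: leq_trans (max_card _) _; rewrite card_ord.
have HN0 : (0 < N)%N.
  rewrite lt0n; apply/negP => /eqP HN.
  move: Hrate; rewrite -/N HN invr0 mulr0 -natrB ?(ltnW Hsdt) //.
  move/eqP; rewrite eq_sym mulf_eq0 invr_eq0 !pnatr_eq0; lia.
have Hls : (l * s = N * (s - d * t))%N.
  move: Hrate; rewrite -/N -natrB ?(ltnW Hsdt) // => /eqP.
  rewrite eqr_div ?pnatr_eq0 -?lt0n // -!natrM eqr_nat => /eqP ->; lia.
have HnN : n = N by rewrite /n Hls mulnK //; lia.
have Kineq : forall K : {set 'I_s}, (#|K| <= d * t)%N ->
    (l <= \sum_(j < s | j \notin K) nj j)%N.
  move=> K HK.
  pose Sig := (\sum_(j < s | j \notin K) <<submxcol Rec j>>)%MS.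
  have HSig : forall u : 'cV[F]_l, Sig *m u = 0 -> u = 0.
    move=> u Hu; apply/eqP; apply/negPn/negP => nu.
    have := core_block _ nu; rewrite ltnNge => /negP; apply.
    apply: leq_trans _ HK; apply: subset_leq_card; apply/subsetP => j.
    rewrite inE; apply: contraR => jK.
    have : (submxcol Rec j <= Sig)%MS.
      by apply: (sumsmx_sup j) => //; rewrite genmxE.
    case/submxP => D HD; by rewrite -submxcol_mul HD -mulmxA Hu mulmx0.
  have Hrk : \rank Sig = l.
    rewrite -mxrank_tr; apply/eqP; change (row_free Sig^T); rewrite -kermx_eq0.
    apply/eqP/row_matrixP => i; rewrite row0.
    have : row i (kermx Sig^T) *m Sig^T = 0 by apply/sub_kermxP; exact: row_sub.
    move=> /(congr1 trmx); rewrite trmx_mul trmxK trmx0 => /HSig H.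
    by rewrite -[row _ _]trmxK H trmx0.
  rewrite -Hrk; apply: leq_trans (_ : _ <= \sum_(j < s | j \notin K) \rank <<submxcol Rec j>>)%N _.
    rewrite /Sig; elim/big_rec2: _ => [|j x M _ IH]; first by rewrite mxrank0.
    by apply: leq_trans (mxrank_adds_leqif _ _).1 _; rewrite leq_add2l.
  by apply: leq_sum => j _; rewrite mxrank_gen rank_leq_row.
have HsN : (s <= N)%N.
  pose Z := [set j : 'I_s | (0 < nj j)%N].
  case: (leqP #|Z| (d * t)) => HZ.
    have := Kineq Z HZ; rewrite big1 => [|j]; first by move=> H; have := leq_trans Hl H.
    by rewrite inE -leqNgt leqn0 => /eqP.
  have h : (#|(set0 : {set 'I_s})| <= d * t <= #|Z|)%N by rewrite cards0 /= ltnW.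
  have [K [_ KZ cK]] := @extend_set _ (d * t) set0 Z (sub0set _) h.
  have := Kineq K (eq_leq cK).
  have HNs : N = (\sum_(j < s | j \in K) nj j + \sum_(j < s | j \notin K) nj j)%N.
    by rewrite /N (bigID (fun j => j \in K)).
  have HKs : (d * t <= \sum_(j < s | j \in K) nj j)%N.
    rewrite -cK -sum1_card; apply: leq_sum => j jK.
    by have := subsetP KZ j jK; rewrite inE.
  move: HNs HKs; set a := (\sum_(j < s | j \in K) nj j)%N; set b := (\sum_(j < s | j \notin K) nj j)%N.
  move=> HNs HKs Hb.
  have Hdt : (0 < d * t)%N by rewrite muln_gt0 Hd Ht.
  nia.
pose G : 'M[F]_(l, n) := \matrix_(i < l, r < n) Rec (cast_ord HnN r) i.
pose L0 : 'I_n -> 'I_s := fun r => tagnat.sig1 (cast_ord HnN r).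
have LW : forall x : 'rV[F]_l, x != 0 ->
    (d * t < #|L0 @: [set r | (x *m G) ord0 r != 0%R]|)%N.
  move=> x nx.
  have nu : x^T != 0 by apply: contra nx => /eqP H; rewrite -[x]trmxK H trmx0.
  apply: leq_trans (core_block _ nu) _; apply: subset_leq_card; apply/subsetP => j.
  rewrite inE => Hj.
  have [q Hq] : exists q, submxcol (Rec *m x^T) j q 0 != 0.
    apply/existsP; move: Hj; apply: contraR; rewrite negb_exists => /forallP H.
    apply/eqP/matrixP => a b; rewrite ord1 [RHS]mxE.
    by have := H a; rewrite negbK => /eqP.
  apply/imsetP; exists (cast_ord (esym HnN) (tagnat.Rank j q)).
    rewrite inE; move: Hq; rewrite !mxE; congr (_ != _).
    by apply: eq_bigr => i _; rewrite /G !mxE cast_ordKV mulrC.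
  by rewrite /L0 cast_ordKV tagnat.Rank1K.
have Hrank : \rank G = l.
  apply/eqP; change (row_free G); rewrite -kermx_eq0.
  apply/eqP/row_matrixP => i; rewrite row0.
  have Hx : row i (kermx G) *m G = 0 by apply/sub_kermxP; exact: row_sub.
  apply/eqP; apply/negPn/negP => nx.
  have := LW _ nx; rewrite Hx.
  have -> : [set r | (0 : 'rV[F]_n) ord0 r != 0%R] = set0.
    by apply/setP => r; rewrite !inE mxE eqxx.
  by rewrite imset0 cards0.
have Hsn : (s <= n)%N by rewrite HnN.
have [L [surj mono]] := @relabel n s Hsn #|[set j | j \notin L0 @: setT]| L0 (leqnn _).
exists l, G, L; split.
- by rewrite Hrank HnN.
- exact: surj.
- move=> c /submxP [x ->] nc.
  have nx : x != 0 by apply: contra nc => /eqP ->; rewrite mul0mx.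
  rewrite /labelweight addn1; apply: leq_trans (LW x nx) _.
  exact: mono.
Qed.
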